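(* Let $n\geq 8$ and $4\leq k\leq n-4$. An $n$-tournament is $k$-skew-spectrally monomorphic if and only if it is switching equivalent to a transitive tournament.
   Context: An $n$-tournament is a digraph on vertex set $V$, $|V|=n$, in which every pair of distinct vertices is joined by exactly one arc. Its adjacency matrix $A=(a_{ij})$ has $a_{ij}=1$ if $v_i$ dominates $v_j$ and $0$ otherwise; its skew-adjacency matrix is $S=A-A^{\top}$. A tournament is $k$-skew-spectrally monomorphic if all $k\times k$ principal submatrices of $S$ have the same characteristic polynomial. A tournament is transitive if whenever $u$ dominates $v$ and $v$ dominates $w$, then $u$ dominates $w$. The switch of a tournament $T$ with respect to $X\subseteq V$ is the tournament obtained by reversing all arcs between $X$ and $V\setminus X$; two tournaments on the same vertex set are switching equivalent if one is a switch of the other. *)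

(* Defs.v *)
From mathcomp Require Import all_boot all_order all_algebra.
Set Implicit Arguments. Unset Strict Implicit. Unset Printing Implicit Defensive.
Import GRing.Theory.
Local Open Scope ring_scope.

(* A tournament on vertex set 'I_n: T u v means "u dominates v". *)
Definition is_tournament (n : nat) (T : rel 'I_n) : Prop :=
  (forall u, ~~ T u u) /\ (forall u v, u != v -> T u v (+) T v u).

Definition adj_mx (n : nat) (T : rel 'I_n) : 'M[int]_n :=
  \matrix_(i, j) (T i j)%:R.
Definition skew_adj_mx (n : nat) (T : rel 'I_n) : 'M[int]_n :=
  adj_mx T - (adj_mx T)^T.

Definition principal_submx (n k : nat) (M : 'M[int]_n) (f : 'I_k -> 'I_n)
  : 'M[int]_k := mxsub f f M.

Definition k_skew_spectrally_monomorphic (n k : nat) (T : rel 'I_n) : Prop :=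
  forall f g : 'I_k -> 'I_n, injective f -> injective g ->
    char_poly (principal_submx (skew_adj_mx T) f)
    = char_poly (principal_submx (skew_adj_mx T) g).

Definition transitive_tournament (n : nat) (T : rel 'I_n) : Prop :=
  forall u v w, T u v -> T v w -> T u w.

Definition switch (n : nat) (T : rel 'I_n) (X : {set 'I_n}) : rel 'I_n :=
  fun u v => if (u \in X) != (v \in X) then T v u else T u v.

Definition switching_equivalent (n : nat) (T T' : rel 'I_n) : Prop :=
  exists X : {set 'I_n}, T' = switch T X.

(* Main.v *)
Require Import Defs.
From mathcomp Require Import all_boot all_order all_algebra.
From mathcomp Require Import all_fingroup ring zify.
Set Implicit Arguments. Unset Strict Implicit. Unset Printing Implicit Defensive.
Import GRing.Theory Num.Theory.

Section P1.
Local Open Scope ring_scope.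

Lemma char_poly_conj (R : comNzRingType) m (A P Q : 'M[R]_m) :
  P *m Q = 1%:M -> char_poly (P *m A *m Q) = char_poly A.
Proof.
move=> PQ.
have E : char_poly_mx (P *m A *m Q) =
   map_mx polyC P *m char_poly_mx A *m map_mx polyC Q.
  rewrite /char_poly_mx mulmxBr mulmxBl -!map_mxM; congr (_ - _).
  rewrite mul_mx_scalar -scalemxAl -map_mxM PQ.
  by apply/matrixP=> i j; rewrite !mxE; case: (i == j); rewrite /= ?mulr1n ?mulr0n ?polyC1 ?mulr1 ?mulr0.
rewrite /char_poly E !det_mulmx mulrAC -det_mulmx -map_mxM PQ map_mx1 det1.
by rewrite mul1r.
Qed.

Lemma char_poly_perm (R : comNzRingType) m (A : 'M[R]_m) (s : 'S_m) :
  char_poly (mxsub s s A) = char_poly A.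
Proof.
have -> : mxsub s s A = perm_mx s *m A *m perm_mx s^-1.
  by rewrite -row_permE -col_permE; apply/matrixP=> i j; rewrite !mxE.
by apply: char_poly_conj; rewrite -perm_mxM mulgV perm_mx1.
Qed.


Lemma char_poly_img (R : comNzRingType) n (M : 'M[R]_n) p q
   (f : 'I_p -> 'I_n) (g : 'I_q -> 'I_n) :
  injective f -> injective g -> [set f i | i : 'I_p] = [set g j | j : 'I_q] ->
  char_poly (mxsub f f M) = char_poly (mxsub g g M).
Proof.
move=> injf injg E.
have epq : p = q.
  by have := congr1 (fun X : {set 'I_n} => #|X|) E; rewrite /= !card_imset // !card_ord.
subst q.
have ex : forall i, exists j, g j == f i.
  move=> i; have : f i \in [set g j | j : 'I_p] by rewrite -E imset_f.
  by case/imsetP=> j _ ->; exists j.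
pose h i := if [pick j | g j == f i] is Some j then j else i.
have gh : forall i, g (h i) = f i.
  move=> i; rewrite /h; case: pickP => [j /eqP //|H].
  by have [j] := ex i; rewrite H.
have hinj : injective h by move=> i i' H; apply: injf; rewrite -!gh H.
have -> : mxsub f f M = mxsub (perm hinj) (perm hinj) (mxsub g g M).
  by apply/matrixP=> i j; rewrite !mxE !permE !gh.
exact: char_poly_perm.
Qed.


Lemma deriv_prod (R : comNzRingType) m (F : 'I_m -> {poly R}) :
  (\prod_(i < m) F i)^`() =
  \sum_(i < m) \prod_(j < m) (if j == i then (F j)^`() else F j).
Proof.
elim: m F => [|m IH] F; first by rewrite big_ord0 !big_ord0 derivC.
rewrite big_ord_recr /= derivM IH big_ord_recr /=; congr (_ + _).
  rewrite mulr_suml; apply: eq_bigr => i _.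
  rewrite [RHS]big_ord_recr /=.
  have -> : (@ord_max m == widen_ord (leqnSn m) i) = false.
    by rewrite -val_eqE /= eq_sym ltn_eqF.
  by congr (_ * _).
rewrite [RHS]big_ord_recr /= eqxx; congr (_ * _); apply: eq_bigr => j _.
have -> : (widen_ord (leqnSn m) j == ord_max) = false.
  by rewrite -val_eqE /= ltn_eqF.
by [].
Qed.


Lemma deriv_det (R : comNzRingType) m (M : 'M[{poly R}]_m) :
  (\det M)^`() =
  \sum_(i < m) \det (\matrix_(j, l) (if j == i then (M j l)^`() else M j l)).
Proof.
rewrite /determinant raddf_sum exchange_big /=; apply: eq_bigr => s _.
rewrite derivM.
have -> : ((-1) ^+ s : {poly R})^`() = 0.
  by rewrite -signr_odd; case: (odd s); rewrite /= ?expr1 ?expr0 ?derivN -?polyC1 ?derivC ?oppr0.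
rewrite mul0r add0r deriv_prod mulr_sumr; apply: eq_bigr => i _.
by congr (_ * _); apply: eq_bigr => j _; rewrite !mxE.
Qed.


Lemma deriv_char_poly (R : comNzRingType) m (A : 'M[R]_m.+1) :
  (char_poly A)^`() = \sum_(i < m.+1) char_poly (row' i (col' i A)).
Proof.
rewrite /char_poly deriv_det; apply: eq_bigr => i _.
set N := \matrix_(j, l) _.
have Nii : forall l, N i l = (i == l)%:R.
  move=> l; rewrite /N !mxE eqxx derivB derivMn derivX derivC subr0.
  by case: (i == l).
rewrite (expand_det_row _ i) (bigD1 i) //= big1 ?addr0; last first.
  by move=> l /negPf nl; rewrite Nii eq_sym nl mul0r.
rewrite Nii eqxx mul1r /cofactor addnn -signr_odd odd_double expr0 mul1r.
congr (\det _); apply/matrixP=> a b; rewrite !mxE (inj_eq lift_inj).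
by rewrite eq_sym (negPf (neq_lift i a)).
Qed.


Definition Phi (R : comNzRingType) n (M : 'M[R]_n) (U : {set 'I_n}) : {poly R} :=
  char_poly (mxsub (fun i : 'I_#|U| => enum_val i) (fun i : 'I_#|U| => enum_val i) M).

Lemma img_enum_val n (U : {set 'I_n}) :
  [set (enum_val i : 'I_n) | i : 'I_#|U|] = U.
Proof.
apply/setP=> x; apply/imsetP/idP => [[i _ ->]|xU]; first exact: enum_valP.
by exists (enum_rank_in xU x); rewrite ?enum_rankK_in.
Qed.

Lemma PhiE (R : comNzRingType) n (M : 'M[R]_n) p (f : 'I_p -> 'I_n) :
  injective f -> Phi M [set f i | i : 'I_p] = char_poly (mxsub f f M).
Proof.
move=> injf; rewrite /Phi; apply: char_poly_img => //; first exact: enum_val_inj.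
by rewrite img_enum_val.
Qed.


Lemma deriv_Phi_gen (R : comNzRingType) n (M : 'M[R]_n) p (f : 'I_p -> 'I_n) :
  injective f ->
  (Phi M [set f i | i : 'I_p])^`() =
  \sum_(v in [set f i | i : 'I_p]) Phi M ([set f i | i : 'I_p] :\ v).
Proof.
move=> injf; rewrite big_imset /=; last by move=> x y _ _; apply: injf.
rewrite PhiE //; case: p f injf => [|m] f injf.
  by rewrite /char_poly det_mx00 derivC big_ord0.
rewrite deriv_char_poly; apply: eq_bigr => i _.
have injfl : injective (fun j => f (lift i j)).
  by move=> a b /injf /lift_inj.
have -> : row' i (col' i (mxsub f f M)) =
          mxsub (fun j => f (lift i j)) (fun j => f (lift i j)) M.
  by apply/matrixP=> a b; rewrite !mxE.
rewrite -PhiE //; congr (Phi M _); apply/setP=> x; rewrite !inE.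
apply/imsetP/andP => [[j _ ->]|[xi /imsetP [j _ xj]]].
  by rewrite (inj_eq injf) eq_sym neq_lift imset_f.
subst x.
have : i != j by apply/eqP => ij; move: xi; rewrite ij eqxx.
by move/unlift_some=> [j' ej _]; exists j' => //; rewrite ej.
Qed.

Lemma deriv_Phi (R : comNzRingType) n (M : 'M[R]_n) (U : {set 'I_n}) :
  (Phi M U)^`() = \sum_(v in U) Phi M (U :\ v).
Proof.
have := @deriv_Phi_gen R n M #|U| (fun i => enum_val i) (@enum_val_inj _ _).
by rewrite img_enum_val.
Qed.


Lemma double_count (R : nmodType) n (U : {set 'I_n}) (P : pred {set 'I_n})
   (F : {set 'I_n} -> R) :
  \sum_(v in U) \sum_(W : {set 'I_n} | (W \subset U :\ v) && P W) F W =
  \sum_(W : {set 'I_n} | (W \subset U) && P W) F W *+ #|U :\: W|.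
Proof.
have E : forall v, v \in U -> \sum_(W : {set 'I_n} | (W \subset U :\ v) && P W) F W =
   \sum_(W : {set 'I_n} | (W \subset U) && P W) (if v \notin W then F W else 0).
  move=> v vU; rewrite [RHS]big_mkcond [LHS]big_mkcond; apply: eq_bigr => W _ /=.
  by rewrite subsetD1; case: (W \subset U); case: (v \in W); case: (P W).
rewrite (eq_bigr _ E) exchange_big; apply: eq_bigr => W /andP [WU _].
rewrite -big_mkcondr /= sumr_const; congr (_ *+ _); apply: eq_card => v.
by rewrite !inE andbC.
Qed.

Lemma derivn_Phi (R : comNzRingType) n (M : 'M[R]_n) t j (U : {set 'I_n}) :
  #|U| = (t + j)%N ->
  (Phi M U)^`(j) = (\sum_(W : {set 'I_n} | (W \subset U) && (#|W| == t)) Phi M W) *+ j`!.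
Proof.
elim: j U => [|j IH] U cU.
  rewrite derivn0 mulr1n (big_pred1 U) // => W.
  rewrite /= eqEcard cU addn0; case WU: (W \subset U) => //=.
  by have := subset_leq_card WU; rewrite cU addn0 eqn_leq => ->.
rewrite derivSn deriv_Phi raddf_sum /=.
rewrite (eq_bigr (fun v => (\sum_(W : {set 'I_n} | (W \subset U :\ v) && (#|W| == t)) Phi M W) *+ j`!)); last first.
  by move=> v vU; apply: IH; move: (cardsD1 v U); rewrite vU cU /=; lia.
rewrite sumrMnl double_count.
rewrite (eq_bigr (fun W => Phi M W *+ j.+1)); last first.
  by move=> W /andP [WU /eqP cW]; rewrite cardsDS // cU cW; congr (_ *+ _); lia.
by rewrite sumrMnl -mulrnA factS mulnC.
Qed.

End P1.

Section P2.
Local Open Scope ring_scope.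
Variable n : nat.
Implicit Types (U V W Z : {set 'I_n}).

Definition sumt (g : {set 'I_n} -> int) t U :=
  \sum_(W : {set 'I_n} | (W \subset U) && (#|W| == t)) g W.

Lemma superset p Z V : Z \subset V -> (#|Z| <= p <= #|V|)%N ->
  exists U, [/\ Z \subset U, U \subset V & #|U| = p].
Proof.
move=> ZV /andP [Zp pV].
have [d ed] : exists d, p = (#|Z| + d)%N by exists (p - #|Z|)%N; lia.
rewrite ed in Zp pV *; clear ed p.
elim: d Z ZV Zp pV => [|d IH] Z ZV Zp pV.
  by exists Z; rewrite addn0.
have : Z \proper V by rewrite properEcard ZV; lia.
case/properP=> _ [x xV xZ].
have h1 : x |: Z \subset V by rewrite subUset sub1set xV.
have h2 : (#|x |: Z| <= #|x |: Z| + d)%N by lia.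
have h3 : (#|x |: Z| + d <= #|V|)%N by rewrite cardsU1 xZ; lia.
have [U [ZU UV cU]] := IH _ h1 h2 h3.
exists U; split=> //; first by apply: subset_trans ZU; apply: subsetUr.
by rewrite cU cardsU1 xZ; lia.
Qed.

Lemma sumt_split (g : {set 'I_n} -> int) t U a : a \notin U ->
  sumt g t.+1 (a |: U) = sumt g t.+1 U + sumt (fun Y => g (a |: Y)) t U.
Proof.
move=> aU; rewrite /sumt (bigID (fun W => a \in W)) /= addrC; congr (_ + _).
  apply: eq_bigl => W; case aW: (a \in W) => /=.
    rewrite andbF; symmetry; apply/negbTE/negP => /andP [WU _].
    by move/subsetP: WU => /(_ a aW); rewrite (negPf aU).
  rewrite andbT; congr (_ && _); apply/idP/idP => H.
    apply/subsetP => x xW; have := subsetP H x xW.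
    by case/setU1P => [xa|//]; move: xW; rewrite xa aW.
  exact: subset_trans H (subsetUr _ _).
rewrite (reindex_onto (fun Y => a |: Y) (fun W => W :\ a)) /=; last first.
  by move=> W /andP [_ aW]; rewrite setD1K.
apply: eq_bigl => Y; rewrite setU11 andbT.
case aY: (a \in Y).
  have -> : (Y \subset U) = false.
    by apply/negbTE/negP => /subsetP /(_ a aY); rewrite (negPf aU).
  rewrite /=; apply/negbTE/negP => /andP [_ /eqP E].
  by move: aY; rewrite -E setD11.
rewrite setU1K ?aY // eqxx andbT cardsU1 aY /= eqSS; congr (_ && _).
apply/idP/idP => H; last exact: setUS.
apply/subsetP => x xY; have := subsetP H x (setU1r a xY).
by case/setU1P => [xa|//]; move: xY; rewrite xa aY.
Qed.



Lemma eq_sub_card W W' : W \subset W' -> #|W| = #|W'| -> W = W'.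
Proof. by move=> sWW' cW; apply/eqP; rewrite eqEcard sWW' cW leqnn. Qed.

Lemma gottlieb t : forall V (g : {set 'I_n} -> int) m,
  (t <= m)%N -> (m + t <= #|V|)%N ->
  (forall U U', U \subset V -> U' \subset V -> #|U| = m -> #|U'| = m ->
     sumt g t U = sumt g t U') ->
  forall W W', W \subset V -> W' \subset V -> #|W| = t -> #|W'| = t ->
  g W = g W'.
Proof.
elim: t => [|t IH] V g m tm mV H W W' WV W'V cW cW'.
  by move/cards0_eq: cW => ->; move/cards0_eq: cW' => ->.
have exch : forall Z a b, Z \subset V -> a \in V -> b \in V -> a \notin Z ->
    b \notin Z -> a != b -> #|Z| = t -> g (a |: Z) = g (b |: Z).
  move=> Z a b ZV aV bV aZ bZ ab cZ.
  case: m tm mV H => [//|m'] tm mV H.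
  pose V' := V :\ a :\ b.
  pose g' := fun Y => g (a |: Y) - g (b |: Y).
  have V'V : V' \subset V by rewrite /V'; apply: subset_trans (subsetDl _ _) (subsetDl _ _).
  have aV' : a \notin V' by rewrite /V' !inE eqxx andbF.
  have bV' : b \notin V' by rewrite /V' !inE eqxx.
  have cV' : #|V'| = (#|V| - 2)%N.
    have bVa : b \in V :\ a by rewrite !inE eq_sym ab.
    move: (cardsD1 a V) (cardsD1 b (V :\ a)); rewrite aV bVa -/V' => -> ->.
    by rewrite !add1n !subSS subn0.
  have sum0 : forall U', U' \subset V' -> #|U'| = m' -> sumt g' t U' = 0.
    move=> U' U'V' cU'.
    have aU' : a \notin U' by apply: contra aV' => /(subsetP U'V').
    have bU' : b \notin U' by apply: contra bV' => /(subsetP U'V').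
    have U'V : U' \subset V by apply: subset_trans U'V' V'V.
    have := H (a |: U') (b |: U'); rewrite !subUset !sub1set aV bV U'V.
    rewrite !cardsU1 (negPf aU') (negPf bU') cU' !sumt_split // => /(_ isT isT erefl erefl).
    move/addrI => E; rewrite /sumt /g' sumrB.
    by apply/eqP; rewrite subr_eq0; apply/eqP; exact: E.
  have ZV' : Z \subset V'.
    apply/subsetP => x xZ; rewrite /V' !inE (subsetP ZV x xZ) andbT.
    by apply/andP; split; apply/eqP => E; [move: bZ|move: aZ]; rewrite -E xZ.
  have tm' : (t <= m')%N by [].
  have mV' : (m' + t <= #|V'|)%N.
    by rewrite cV'; move: mV; move: (#|V|) => N; clear -N; lia.
  have IH' := IH V' g' m' tm' mV' (fun U U' UV U'V cU cU' => etrans (sum0 U UV cU) (esym (sum0 U' U'V cU'))).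
  have [U' [ZU' U'V' cU']] : exists U', [/\ Z \subset U', U' \subset V' & #|U'| = m'].
    apply: superset => //; rewrite cZ tm' /=; move: mV'; move: (#|V'|) => N; clear -N; lia.
  have e0 := sum0 U' U'V' cU'.
  have : sumt g' t U' = g' Z *+ #|[set Y : {set 'I_n} | (Y \subset U') && (#|Y| == t)]|.
    rewrite /sumt -sumr_const; apply: eq_big => [Y|Y /andP [YU' /eqP cY]]; first by rewrite inE.
    by apply: IH' => //; apply: subset_trans YU' U'V'.
  rewrite e0 => /esym /eqP; rewrite mulrn_eq0 => /orP [/eqP c0|].
    have zin : Z \in [set Y : {set 'I_n} | (Y \subset U') && (#|Y| == t)].
      by rewrite inE ZU' cZ eqxx.
    by rewrite (cardD1 Z) zin in c0.
  by rewrite /g' subr_eq0 => /eqP.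
suff K : forall d W W', (#|W :\: W'| <= d)%N -> W \subset V -> W' \subset V ->
    #|W| = t.+1 -> #|W'| = t.+1 -> g W = g W'.
  exact: (K #|W :\: W'|).
clear W W' WV W'V cW cW'.
elim=> [|d IHd] W W' dW WV W'V cW cW';
  (case: (set_0Vmem (W :\: W')) => [E|[a aD]];
  [by move/eqP: E; rewrite setD_eq0 => /eq_sub_card ->; rewrite // cW cW'|]).
  by move: dW; rewrite (cardD1 a) aD.
have [b bD] : exists b, b \in W' :\: W.
  case: (set_0Vmem (W' :\: W)) => [E'|[x xD]]; last by exists x.
  move/eqP: E'; rewrite setD_eq0 => /eq_sub_card E'.
  by move: aD; rewrite E' ?cW ?cW' // setDv inE.
move: aD bD; rewrite !inE => /andP [aW' aW] /andP [bW bW'].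
have eW : W = a |: (W :\ a) by rewrite setD1K.
have cZ : #|W :\ a| = t.
  by move: (cardsD1 a W); rewrite aW cW add1n => -[].
have ZV : W :\ a \subset V by apply: subset_trans (subsetDl _ _) WV.
have aZ : a \notin W :\ a by rewrite !inE eqxx.
have bZ : b \notin W :\ a by rewrite !inE (negPf bW) andbF.
have ab : a != b by apply: contraNneq aW' => ->.
rewrite eW (exch _ a b ZV (subsetP WV a aW) (subsetP W'V b bW') aZ bZ ab cZ).
apply: IHd => //.
- have sub : (b |: (W :\ a)) :\: W' \subset (W :\: W') :\ a.
    apply/subsetP => x; rewrite !inE => /andP [xW' /orP [/eqP xb|/andP [xa xW]]].
      by move: xW'; rewrite xb bW'.
    by rewrite xa xW' xW.
  apply: leq_trans (subset_leq_card sub) _.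
  move: (cardsD1 a (W :\: W')) dW; rewrite !inE aW' aW /= add1n => ->.
  by rewrite ltnS.
- by rewrite subUset sub1set (subsetP W'V b bW') ZV.
- by rewrite cardsU1 bZ cZ.
Qed.

End P2.

Section P3.
Local Open Scope ring_scope.

Lemma det2 (R : comNzRingType) (C : 'M[R]_2) : \det C = C 0 0 * C 1 1 - C 0 1 * C 1 0.
Proof.
pose D (i j : nat) := C (inord i) (inord j).
have CE : forall i j, C i j = D i j by move=> i j; rewrite /D !inord_val.
rewrite (expand_det_row _ 0) !big_ord_recl big_ord0 /cofactor !det_mx11 !mxE !CE /=.
ring.
Qed.

Lemma det3 (R : comNzRingType) (C : 'M[R]_3) : \det C =
  C 0 0 * (C 1 1 * C 2 2 - C 1 2 * C 2 1) - C 0 1 * (C 1 0 * C 2 2 - C 1 2 * C 2 0)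
  + C 0 2 * (C 1 0 * C 2 1 - C 1 1 * C 2 0).
Proof.
pose D (i j : nat) := C (inord i) (inord j).
have CE : forall i j, C i j = D i j by move=> i j; rewrite /D !inord_val.
rewrite (expand_det_row _ 0) !big_ord_recl big_ord0 /cofactor !det2 !mxE !CE /=.
ring.
Qed.

Lemma det4 (B : 'M[int]_4) :
  (forall i, B i i = 0) -> (forall i j, B j i = - B i j) ->
  \det B = (B 0 1 * B 2 3 - B 0 2 * B 1 3 + B 0 3 * B 1 2) ^+ 2.
Proof.
move=> B0 BN.
pose D (i j : nat) := B (inord i) (inord j).
have CE : forall i j, B i j = D i j by move=> i j; rewrite /D !inord_val.
rewrite (expand_det_row _ 0) !big_ord_recl big_ord0 /cofactor !det3 !mxE !CE /=.
have D0 : forall i, D i i = 0 by move=> i; rewrite /D B0.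
have DN : forall i j, D j i = - D i j by move=> i j; rewrite /D BN.
rewrite !D0 (DN 1%N 0%N) (DN 2%N 0%N) (DN 3%N 0%N) (DN 2%N 1%N) (DN 3%N 1%N) (DN 3%N 2%N).
ring.
Qed.
End P3.

Section P4.
Local Open Scope ring_scope.
Variable n : nat.

Lemma skewE (T : rel 'I_n) i j :
  skew_adj_mx T i j = (T i j)%:R - (T j i)%:R.
Proof. by rewrite !mxE. Qed.

Definition sgnX (X : {set 'I_n}) v : int := if v \in X then -1 else 1.

Lemma skew_switch (T : rel 'I_n) (X : {set 'I_n}) i j : skew_adj_mx (switch T X) i j =
   sgnX X i * sgnX X j * skew_adj_mx T i j.
Proof.
rewrite !skewE /switch /sgnX.
by case: (i \in X); case: (j \in X) => /=; ring.
Qed.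

Lemma charpoly_switch (T : rel 'I_n) (X : {set 'I_n}) p (f : 'I_p -> 'I_n) :
  char_poly (mxsub f f (skew_adj_mx (switch T X))) =
  char_poly (mxsub f f (skew_adj_mx T)).
Proof.
pose P : 'M[int]_p := diag_mx (\row_i sgnX X (f i)).
have sq : forall v, sgnX X v * sgnX X v = 1.
  by move=> v; rewrite /sgnX; case: (v \in X); ring.
have -> : mxsub f f (skew_adj_mx (switch T X)) = P *m mxsub f f (skew_adj_mx T) *m P.
  apply/matrixP => i j; rewrite mul_diag_mx mul_mx_diag !mxE /switch /sgnX.
  by case: (f i \in X); case: (f j \in X) => /=; ring.
apply: char_poly_conj; apply/matrixP => i j; rewrite mul_diag_mx !mxE.
by case: (i == j); rewrite /= ?mulr1n ?mulr0n ?mulr0 ?mulr1 ?sq.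
Qed.

Lemma Phi_switch (T : rel 'I_n) (X : {set 'I_n}) (U : {set 'I_n}) :
  Phi (skew_adj_mx (switch T X)) U = Phi (skew_adj_mx T) U.
Proof. exact: charpoly_switch. Qed.

Lemma charpoly_trans (T' : rel 'I_n) k (f : 'I_k -> 'I_n) :
  is_tournament T' -> transitive_tournament T' -> injective f ->
  char_poly (mxsub f f (skew_adj_mx T')) =
  char_poly (skew_adj_mx (fun a b : 'I_k => (a < b)%N)).
Proof.
move=> [irr tot] tr injf.
pose rho i : nat := #|[set j | T' (f j) (f i)]|.
have rho_lt : forall i, (rho i < k)%N.
  move=> i; have sub : [set j | T' (f j) (f i)] \subset [set: 'I_k] :\ i.
    by apply/subsetP => j; rewrite !inE andbT; apply: contraTneq => ->; exact: irr.
  apply: (leq_ltn_trans (subset_leq_card sub)).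
  have e := cardsD1 i [set: 'I_k]; rewrite cardsT card_ord in_setT add1n in e.
  by rewrite [X in (_ < X)%N]e.
have mono : forall i j, T' (f i) (f j) -> (rho i < rho j)%N.
  move=> i j Tij; apply: proper_card; apply/properP; split.
    by apply/subsetP => l; rewrite !inE => Tli; apply: tr Tli Tij.
  by exists i; rewrite !inE ?Tij ?(negPf (irr _)).
pose r i := Ordinal (rho_lt i).
have Tr : forall i j, T' (f i) (f j) = (r i < r j)%N.
  move=> i j; case: (eqVneq i j) => [->|ij]; first by rewrite (negPf (irr _)) ltnn.
  have := tot _ _ (contra_neq (@injf i j) ij).
  case Tij: (T' (f i) (f j)) => /=; first by rewrite (mono _ _ Tij).
  by move=> Tji; apply/esym/negbTE; rewrite -leqNgt; exact: ltnW (mono _ _ Tji).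
have rinj : injective r.
  move=> i j rij; apply/eqP; apply/negP => /negP ij.
  have := tot _ _ (contra_neq (@injf i j) ij).
  by rewrite !Tr rij ltnn.
have -> : mxsub f f (skew_adj_mx T') =
   mxsub (perm rinj) (perm rinj) (skew_adj_mx (fun a b : 'I_k => (a < b)%N)).
  by apply/matrixP => i j; rewrite !mxE !permE !Tr.
exact: char_poly_perm.
Qed.

End P4.

Section P5.
Local Open Scope ring_scope.
Variable n : nat.

Lemma enum_fun (U : {set 'I_n}) k : #|U| = k ->
  exists f : 'I_k -> 'I_n, injective f /\ [set f i | i : 'I_k] = U.
Proof.
move=> cU; pose f i := (enum_val (cast_ord (esym cU) i) : 'I_n).
exists f; split.
  by move=> i j /enum_val_inj /cast_ord_inj.
apply/setP=> x; apply/imsetP/idP => [[i _ ->]|xU]; first exact: enum_valP.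
by exists (cast_ord cU (enum_rank_in xU x)); rewrite // /f cast_ordK enum_rankK_in.
Qed.

Definition cyc (T : rel 'I_n) a b c :=
  [&& T a b, T b c & T c a] || [&& T b a, T c b & T a c].

Lemma tour_rev (T : rel 'I_n) a b : is_tournament T -> a != b -> T b a = ~~ T a b.
Proof. by case=> _ tot ab; move: (tot a b ab); case: (T a b); case: (T b a). Qed.

Lemma tri (T : rel 'I_n) a b c : is_tournament T -> a != b -> b != c -> a != c ->
  let s x y := ((T x y)%:R - (T y x)%:R : int) in
  (s b c - s a c + s a b) ^+ 2 = if cyc T a b c then 9 else 1.
Proof.
move=> tT ab bc ac s; rewrite /s /cyc !(tour_rev tT ab) !(tour_rev tT bc) !(tour_rev tT ac).
by case: (T a b); case: (T b c); case: (T a c).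
Qed.

Lemma no4cyc (T : rel 'I_n) a b c d : is_tournament T ->
  a != b -> a != c -> a != d -> b != c -> b != d -> c != d ->
  ~~ [&& cyc T a b c, cyc T a b d, cyc T a c d & cyc T b c d].
Proof.
move=> tT ab ac ad bc bd cd; rewrite /cyc.
rewrite !(tour_rev tT ab) !(tour_rev tT ac) !(tour_rev tT ad).
rewrite !(tour_rev tT bc) !(tour_rev tT bd) !(tour_rev tT cd).
by case: (T a b); case: (T a c); case: (T a d); case: (T b c); case: (T b d); case: (T c d).
Qed.


Lemma quad_inj (v0 a b c : 'I_n) :
  uniq [:: v0; a; b; c] ->
  injective (fun i : 'I_4 => tnth [tuple v0; a; b; c] i).
Proof.
move=> U i j; rewrite !(tnth_nth v0) => E; apply/val_inj; apply/eqP.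
by rewrite -(nth_uniq v0 _ _ U) ?E //= ltn_ord.
Qed.

Lemma h_quad (T : rel 'I_n) v0 a b c : is_tournament T ->
  (forall v, v != v0 -> T v0 v) ->
  uniq [:: v0; a; b; c] ->
  (Phi (skew_adj_mx T) [set tnth [tuple v0; a; b; c] i | i : 'I_4])`_0 =
  if cyc T a b c then 9 else 1.
Proof.
move=> tT src U.
have [irr tot] := tT.
rewrite PhiE; last exact: quad_inj.
rewrite char_poly_det (_ : (-1 : int) ^+ 4 = 1) // mul1r det4; last 2 first.
- by move=> i; rewrite !mxE (negPf (irr _)) subrr.
- by move=> i j; rewrite !mxE opprB.
move: U; rewrite /= !inE !negb_or => /andP [/and3P [v0a v0b v0c] /andP [/andP [ab ac] /andP [bc _]]].
rewrite !mxE /=.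
have s1 : forall x, x != v0 -> (T v0 x)%:R - (T x v0)%:R = 1 :> int.
  by move=> x xv; rewrite src // (tour_rev tT) ?src // eq_sym.
rewrite !s1 1?eq_sym //.
have := tri tT ab bc ac => /= <-.
by congr (_ ^+ 2); ring.
Qed.

End P5.

Section P6.
Local Open Scope ring_scope.

Lemma backward n k (T : rel 'I_n) :
  (exists T' : rel 'I_n, is_tournament T' /\ transitive_tournament T' /\
                        switching_equivalent T T') ->
  k_skew_spectrally_monomorphic k T.
Proof.
move=> [T' [tT' [trT' [X E]]]]; subst T'.
move=> f g injf injg; rewrite /principal_submx.
by rewrite -(charpoly_switch T X f) -(charpoly_switch T X g) !charpoly_trans.
Qed.

Lemma forward n k (T : rel 'I_n) :
  (8 <= n)%N -> (4 <= k)%N -> (k <= n - 4)%N -> is_tournament T ->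
  k_skew_spectrally_monomorphic k T ->
  exists T' : rel 'I_n, is_tournament T' /\ transitive_tournament T' /\
                        switching_equivalent T T'.
Proof.
move=> n8 k4 kn tT mono.
set S := skew_adj_mx T.
have PhiU : forall U U' : {set 'I_n}, #|U| = k -> #|U'| = k -> Phi S U = Phi S U'.
  move=> U U' cU cU'.
  have [f [injf <-]] := enum_fun cU; have [g [injg <-]] := enum_fun cU'.
  by rewrite !PhiE //; exact: mono.
pose h W := (Phi S W)`_0.
have key : forall U : {set 'I_n}, #|U| = k ->
    ((Phi S U)^`(k - 4))`_0 = sumt h 4 U *+ (k - 4)`!.
  move=> U cU; rewrite (@derivn_Phi _ _ S 4 (k - 4) U); last by rewrite cU subnKC.
  by rewrite coefMn coef_sum.
have sums : forall U U' : {set 'I_n}, U \subset setT -> U' \subset setT -> #|U| = k ->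
    #|U'| = k -> sumt h 4 U = sumt h 4 U'.
  move=> U U' _ _ cU cU'.
  have := congr1 (fun p => (p^`(k - 4))`_0) (PhiU U U' cU cU').
  rewrite /= !key // => /eqP; rewrite eqrMn2r => /orP [|/eqP //].
  by rewrite eqn0Ngt fact_gt0.
have hconst : forall W W' : {set 'I_n}, #|W| = 4%N -> #|W'| = 4%N -> h W = h W'.
  move=> W W' cW cW'; apply: (@gottlieb n 4 setT h k) => //; try exact: subsetT.
  by rewrite cardsT card_ord; move: kn n8; clear; lia.
have n0 : (0 < n)%N by move: n8; clear; lia.
pose v0 := Ordinal n0.
pose X := [set v | T v v0].
pose T' := switch T X.
have [irr tot] := tT.
have tT' : is_tournament T'.
  split.
    by move=> u; rewrite /T' /switch eqxx /=; exact: irr.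
  move=> u v uv; rewrite /T' /switch.
  by case: (u \in X); case: (v \in X) => /=; rewrite ?(addbC (T v u)); exact: tot.
have src : forall v, v != v0 -> T' v0 v.
  move=> v vv0; rewrite /T' /switch !inE (negPf (irr v0)) /=.
  case Tv: (T v v0) => //=.
  by move: (tot v0 v); rewrite eq_sym vv0 Tv addbF => /(_ isT).
have [irr' tot'] := tT'.
have anti : forall u v, T' u v -> T' v u -> False.
  move=> u v; case: (eqVneq u v) => [->|uv]; first by rewrite (negPf (irr' v)).
  by rewrite (tour_rev tT' uv) => ->.
have hT' : forall W : {set 'I_n}, (Phi (skew_adj_mx T') W)`_0 = h W.
  by move=> W; rewrite /h /T' Phi_switch.
have quad : forall a b c, uniq [:: v0; a; b; c] ->
    h [set tnth [tuple v0; a; b; c] i | i : 'I_4] = if cyc T' a b c then 9 else 1.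
  by move=> a b c U; rewrite -hT' h_quad.
have cq : forall a b c, uniq [:: v0; a; b; c] ->
    #|[set tnth [tuple v0; a; b; c] i | i : 'I_4]| = 4%N.
  by move=> a b c U; rewrite card_imset ?card_ord //; exact: quad_inj.
have nocyc : forall a b c, uniq [:: v0; a; b; c] -> ~~ cyc T' a b c.
  move=> a b c U; apply/negP => C.
  have u : forall a' b' c', uniq [:: v0; a'; b'; c'] -> cyc T' a' b' c'.
    move=> a' b' c' U'; have := hconst _ _ (cq _ _ _ U') (cq _ _ _ U).
    rewrite (quad _ _ _ U') (quad _ _ _ U) C.
    by case: (cyc T' a' b' c') => // /eqP.
  have l1 : (1 < n)%N by move: n8; clear; lia.
  have l2 : (2 < n)%N by move: n8; clear; lia.
  have l3 : (3 < n)%N by move: n8; clear; lia.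
  have l4 : (4 < n)%N by move: n8; clear; lia.
  pose w1 := Ordinal l1; pose w2 := Ordinal l2; pose w3 := Ordinal l3; pose w4 := Ordinal l4.
  have := @no4cyc n T' w1 w2 w3 w4 tT' isT isT isT isT isT isT.
  by rewrite !u.
have trT' : transitive_tournament T'.
  move=> x y z Txy Tyz.
  case: (eqVneq x v0) => [xv|xv].
    subst x; case: (eqVneq z v0) => [zv|zv]; last exact: src.
    subst z; have yv : y != v0 by apply: contraTneq Txy => ->; exact: irr'.
    by case: (anti _ _ Tyz (src _ yv)).
  case: (eqVneq y v0) => [yv|yv].
    by subst y; case: (anti _ _ Txy (src _ xv)).
  case: (eqVneq z v0) => [zv|zv].
    by subst z; case: (anti _ _ Tyz (src _ yv)).
  have xy : x != y by apply: contraTneq Txy => ->; exact: irr'.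
  have yz : y != z by apply: contraTneq Tyz => ->; exact: irr'.
  case: (eqVneq x z) => [xz|xz].
    by subst z; case: (anti _ _ Txy Tyz).
  have U : uniq [:: v0; x; y; z].
    by rewrite /= !inE !negb_or !(eq_sym v0) xv yv zv xy yz xz.
  have := nocyc _ _ _ U; rewrite /cyc Txy Tyz /= (tour_rev tT' xz).
  by case: (T' x z).
by exists T'; split=> //; split=> //; exists X.
Qed.

End P6.

Unset Implicit Arguments.

Theorem proposition5p1 (n k : nat) (T : rel 'I_n) :
  8 <= n -> 4 <= k -> k <= n - 4 -> is_tournament T ->
  k_skew_spectrally_monomorphic k T <->
  exists T' : rel 'I_n, is_tournament T' /\ transitive_tournament T' /\
                        switching_equivalent T T'.
Proof.
move=> n8 k4 kn tT; split; first exact: forward.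
exact: backward.
Qed.
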